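(* Let $G$ be a graph, let $S,T \subseteq V(G)$ be disjoint, and let $P^-$ and $P^+$ be the closest and farthest minimum left-restricted $(S,T)$-separators, i.e. minimum left-restricted $(S,T)$-separators such that every minimum left-restricted $(S,T)$-separator $P$ satisfies $R_G(S,P^-) \subseteq R_G(S,P) \subseteq R_G(S,P^+)$. Then for any vertex $v \in V(G)$: (1) $\lambda^{\mathrm{L}}_G(S \cup \{v\}, T) > \lambda^{\mathrm{L}}_G(S,T)$ if and only if $v \in R_G(T,P^+) \cup P^+$; (2) $\lambda^{\mathrm{L}}_G(S, T \cup \{v\}) > \lambda^{\mathrm{L}}_G(S,T)$ if and only if $v \in R_G(S,P^-)$.
   Context: For $S,T \subseteq V(G)$, a set $P \subseteq V(G)$ is an (unrestricted) $(S,T)$-separator if every path from a vertex of $S$ to a vertex of $T$ contains a vertex of $P$; it is a left-restricted $(S,T)$-separator if additionally $P \cap S = \emptyset$. $\lambda^{\mathrm{L}}_G(S,T)$ is the minimum size of a left-restricted $(S,T)$-separator, or $+\infty$ if none exists (which happens exactly when $S \cap T \neq \emptyset$). For vertex sets $X,P$, $R_G(X,P)$ denotes the set of vertices reachable in $G-P$ from at least one vertex of $X \setminus P$. (Closest and farthest minimum left-restricted separators exist when $S \cap T = \emptyset$.) *)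

(* Defs.v *)
From mathcomp Require Import all_boot.
From Stdlib Require Import ClassicalEpsilon.
Set Implicit Arguments. Unset Strict Implicit. Unset Printing Implicit Defensive.

(* A (finite, simple, undirected) graph: vertex type V : finType and a
   symmetric irreflexive adjacency relation e : rel V. *)

Section Sep.
Variables (V : finType) (e : rel V).

Definition separator (S T P : {set V}) : Prop :=
  forall (x : V) (p : seq V), path e x p -> x \in S -> last x p \in T ->
    has (fun y => y \in P) (x :: p).

Definition lsep (S T P : {set V}) : Prop :=
  separator S T P /\ [disjoint P & S].

Definition lsepb (S T P : {set V}) : bool :=
  if excluded_middle_informative (lsep S T P) then true else false.

(* lambda^L_G(S,T): None encodes +infinity (no left-restricted separator).
   Every left-restricted separator has size <= #|V|, so #|V| is a neutral
   default for the minimum. *)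
Definition lamL (S T : {set V}) : option nat :=
  if [exists P : {set V}, lsepb S T P]
  then Some (\big[minn/#|V|]_(P : {set V} | lsepb S T P) #|P|)
  else None.

Definition gt_ext (a b : option nat) : bool :=
  match a, b with
  | Some m, Some n => n < m
  | None, Some _ => true
  | _, None => false
  end.

Definition min_lsep (S T P : {set V}) : Prop :=
  lsep S T P /\ forall Q : {set V}, lsep S T Q -> #|P| <= #|Q|.

Definition avoid_rel (P : {set V}) : rel V :=
  [rel a b | [&& e a b, a \notin P & b \notin P]].

Definition reach (X P : {set V}) : {set V} :=
  [set y | [exists x, [&& x \in X, x \notin P & connect (avoid_rel P) x y]]].

End Sep.

(* Main.v *)
Require Import Defs.
From mathcomp Require Import all_boot.
From Stdlib Require Import ClassicalEpsilon.
From mathcomp Require Import zify.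

Lemma disjointP {T : finType} (A B : {set T}) :
  reflect (forall x, x \in A -> x \in B -> False) [disjoint A & B].
Proof.
rewrite -setI_eq0; apply: (iffP eqP) => [H x HA HB | H].
  have : x \in A :&: B by rewrite inE HA HB.
  by rewrite H inE.
apply/setP => x; rewrite !inE; apply/negP => /andP [HA HB]; exact: H x HA HB.
Qed.

Lemma lsepbP {V : finType} (e : rel V) S T P : lsepb e S T P <-> lsep e S T P.
Proof. rewrite /lsepb; case: excluded_middle_informative => //. Qed.

Lemma bigmin_le {V : finType} (e : rel V) S T Q : lsepb e S T Q ->
  \big[minn/#|V|]_(P : {set V} | lsepb e S T P) #|P| <= #|Q|.
Proof.
move=> HQ; have : Q \in index_enum {set V} by rewrite mem_index_enum.
elim: (index_enum _) => [//|x r IH]; rewrite inE big_cons.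
case/orP => [/eqP <-|Hr]; first by rewrite HQ geq_minl.
case: ifP => _; last exact: IH.
rewrite geq_min IH //; exact: orbT.
Qed.

Lemma bigmin_ge {V : finType} (e : rel V) S T k :
  k <= #|V| -> (forall Q, lsepb e S T Q -> k <= #|Q|) ->
  k <= \big[minn/#|V|]_(P : {set V} | lsepb e S T P) #|P|.
Proof.
move=> Hk HQ; apply: (big_ind (fun x => k <= x)) => //.
  by move=> x y Hx Hy; rewrite leq_min Hx Hy.
Qed.

Lemma gt_lam {V : finType} (e : rel V) S T k :
  gt_ext (lamL e S T) (Some k) <-> ~ (exists Q, lsep e S T Q /\ #|Q| <= k).
Proof.
rewrite /lamL; case: ifP => [/existsP [P0 HP0]|/existsP Hn] /=.
- split.
  + move=> Hlt [Q [HQ HQk]].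
    have H := @bigmin_le V e S T Q (proj2 (lsepbP e S T Q) HQ).
    by have := leq_trans Hlt (leq_trans H HQk); rewrite ltnn.
  + move=> Hn; rewrite ltnNge; apply/negP => Hle.
    have : k.+1 <= \big[minn/#|V|]_(P : {set V} | lsepb e S T P) #|P|.
      apply: bigmin_ge.
      * rewrite ltnNge; apply/negP => HV; apply: Hn; exists P0; split.
          exact/lsepbP.
        exact: leq_trans (max_card _) HV.
      * move=> Q HQ; rewrite ltnNge; apply/negP => HQk; apply: Hn.
        exists Q; split => //; exact/lsepbP.
    move=> H; have := leq_trans H Hle; by rewrite ltnn.
- split => // _ [Q [HQ _]]; apply: Hn; exists Q; exact/lsepbP.
Qed.

Lemma lam_min {V : finType} {e : rel V} {S T P : {set V}} : min_lsep e S T P ->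
  lamL e S T = Some #|P|.
Proof.
move=> [HP Hmin]; rewrite /lamL.
have HPb : lsepb e S T P by exact/lsepbP.
have -> : [exists P, lsepb e S T P] by apply/existsP; exists P.
congr Some; apply/eqP; rewrite eqn_leq bigmin_le //=.
apply: bigmin_ge; first exact: max_card.
by move=> Q /lsepbP; apply: Hmin.
Qed.

Definition nb {V : finType} (e : rel V) (A : {set V}) : {set V} :=
  [set z | (z \notin A) && [exists y, (y \in A) && e y z]].

Lemma avoid_notin {V : finType} {e : rel V} {P : {set V}} {x y} :
  connect (avoid_rel e P) x y -> x \notin P -> y \notin P.
Proof.
move=> C Hx.
have Hc : closed (avoid_rel e P) [pred z | z \notin P].
  by move=> a b /and3P [_ H1 H2]; rewrite !inE /= H1 H2.
by have := closed_connect Hc C; rewrite !inE Hx => <-.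
Qed.

Lemma avoid_path {V : finType} {e : rel V} {P : {set V}} {x p} :
  path (avoid_rel e P) x p -> path e x p /\ all (fun z => z \notin P) p.
Proof.
elim: p x => [//|y p IH] x /= /andP [/and3P [Hxy _ Hy] Hp].
by have [H1 H2] := IH _ Hp; rewrite Hxy Hy H1 H2.
Qed.

Lemma path_avoid {V : finType} {e : rel V} {P : {set V}} {x p} :
  path e x p -> x \notin P -> all (fun z => z \notin P) p ->
  path (avoid_rel e P) x p.
Proof.
elim: p x => [//|y p IH] x /= /andP [Hxy Hp] Hx /andP [Hy Hall].
rewrite /=; apply/andP; split; first by rewrite /avoid_rel /= Hxy Hx Hy.
exact: IH.
Qed.

Lemma reachP {V : finType} (e : rel V) (X P : {set V}) y :
  reflect (exists2 x, (x \in X) && (x \notin P) & connect (avoid_rel e P) x y)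
    (y \in reach e X P).
Proof.
rewrite inE; apply: (iffP existsP).
  by move=> [x /and3P [H1 H2 H3]]; exists x; rewrite ?H1 ?H2.
by move=> [x /andP [H1 H2] H3]; exists x; rewrite H1 H2 H3.
Qed.

Lemma reach_notin {V : finType} {e : rel V} {X P : {set V}} {y} :
  y \in reach e X P -> y \notin P.
Proof. by move=> /reachP [x /andP [_ Hx] C]; exact: avoid_notin C Hx. Qed.

Lemma reach_sub {V : finType} {e : rel V} {X P : {set V}} {x} :
  x \in X -> x \notin P -> x \in reach e X P.
Proof. by move=> H1 H2; apply/reachP; exists x; rewrite ?H1 ?H2. Qed.

Lemma reach_sep {V : finType} {e : rel V} {X T P : {set V}} {y} :
  separator e X T P -> y \in reach e X P -> y \in T -> False.
Proof.
move=> Hsep /reachP [x /andP [HX Hx] /connectP [p Hp Hy]] HT.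
have [Hp' Hall] := avoid_path Hp.
have := Hsep x p Hp' HX; rewrite -Hy => /(_ HT) /=.
rewrite (negbTE Hx) /=.
by move/hasP => [z Hz HzP]; move/allP: Hall => /(_ z Hz); rewrite HzP.
Qed.

Lemma reach_step {V : finType} {e : rel V} {X P : {set V}} {y z} :
  y \in reach e X P -> e y z -> z \notin P -> z \in reach e X P.
Proof.
move=> Hy Hyz Hz; have HyP := reach_notin Hy.
move/reachP: Hy => [x Hx C]; apply/reachP; exists x => //.
apply: connect_trans C _; apply: connect1; by rewrite /avoid_rel /= Hyz HyP Hz.
Qed.

Lemma nb_reach {V : finType} (e : rel V) (X P : {set V}) : nb e (reach e X P) \subset P.
Proof.
apply/subsetP => z; rewrite inE => /andP [Hz /existsP [y /andP [Hy Hyz]]].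
apply/negPn/negP => HzP; move/negP: Hz; apply; exact: reach_step Hy Hyz HzP.
Qed.

Lemma nb_has {V : finType} {e : rel V} {A : {set V}} {x p} :
  path e x p -> x \in A -> last x p \notin A -> has (fun z => z \in nb e A) p.
Proof.
elim: p x => [/= x _ -> //|y p IH] x /= /andP [Hxy Hp] Hx Hl.
case HyA: (y \in A).
  by rewrite (IH y Hp HyA Hl) orbT.
apply/orP; left; rewrite inE HyA /=; apply/existsP; exists x; by rewrite Hx.
Qed.

Lemma nb_sep {V : finType} (e : rel V) (S T A : {set V}) :
  S \subset A -> (forall y, y \in A -> y \in T -> False) -> lsep e S T (nb e A).
Proof.
move=> HSA HAT; split.
  move=> x p Hp HxS HlT /=; apply/orP; right; apply: nb_has Hp _ _.
    exact: (subsetP HSA).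
  by apply/negP => HA; exact: HAT HA HlT.
rewrite disjoint_subset; apply/subsetP => z; rewrite !inE => /andP [Hz _].
by apply/negP => HS; move/negP: Hz; apply; exact: (subsetP HSA).
Qed.

Lemma submod {V : finType} (e : rel V) (A B : {set V}) :
  #|nb e (A :|: B)| + #|nb e (A :&: B)| <= #|nb e A| + #|nb e B|.
Proof.
set a := nb e A; set b := nb e B.
have H1 : nb e (A :|: B) \subset (a :\: B) :|: (b :\: A).
  apply/subsetP => z; rewrite !inE negb_or => /andP [/andP [HA HB]].
  move=> /existsP [y /andP [Hy Hyz]]; move: Hy; rewrite inE => /orP [Hy|Hy].
    by rewrite HB HA /=; apply/orP; left; apply/existsP; exists y; rewrite Hy.
  by rewrite HB HA /= orbC; apply/orP; left; apply/existsP; exists y; rewrite Hy.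
have H2 : nb e (A :&: B) \subset ((a :&: B) :|: (b :&: A)) :|: ((a :\: B) :&: (b :\: A)).
  apply/subsetP => z; rewrite !inE negb_and => /andP [Hn].
  move=> /existsP [y /andP [Hy Hyz]]; move: Hy; rewrite inE => /andP [HyA HyB].
  have Ha : [exists y, (y \in A) && e y z] by apply/existsP; exists y; rewrite HyA.
  have Hb : [exists y, (y \in B) && e y z] by apply/existsP; exists y; rewrite HyB.
  rewrite Ha Hb !andbT.
  by case: (z \in A) Hn; case: (z \in B).
have E1 := cardsID B a; have E2 := cardsID A b.
have L1 := subset_leq_card H1; have L2 := subset_leq_card H2.
have U1 := cardsUI (a :\: B) (b :\: A).
have U2 := cardsUI (a :&: B) (b :&: A).
have U3 := cardsUI ((a :&: B) :|: (b :&: A)) ((a :\: B) :&: (b :\: A)).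
lia.
Qed.

Lemma reach_conn {V : finType} {e : rel V} {X P : {set V}} {y z} :
  y \in reach e X P -> connect (avoid_rel e P) y z -> z \in reach e X P.
Proof.
move=> /reachP [x Hx C] C2; apply/reachP; exists x => //; exact: connect_trans C C2.
Qed.

Lemma suffix_lem {V : finType} {e : rel V} (P : {set V}) (v : V) x p :
  path e x p -> v \in x :: p -> all (fun z => z \notin P :\ v) (x :: p) ->
  exists q, [/\ path e v q, last v q = last x p & all (fun z => z \notin P) q].
Proof.
elim: p x => [|y p IH] x /=.
  by move=> _; rewrite inE => /eqP ->; exists [::].
move=> /andP [Hxy Hp]; rewrite inE => /orP [/eqP Hvx|Hv] /andP [_ Hall].
  case Hin: (v \in y :: p).
    have [q [H1 H2 H3]] := IH y Hp Hin Hall; by exists q.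
  exists (y :: p); split => //; first by rewrite /= Hvx Hxy Hp.
  apply/allP => z Hz; have := allP (Hall : all (fun z => z \notin P :\ v) (y :: p)) z Hz; rewrite !inE negb_and.
  case/orP => // /negPn /eqP Hzv; move: Hin; by rewrite -Hzv Hz.
have [q [H1 H2 H3]] := IH y Hp Hv Hall; by exists q.
Qed.

Lemma avoid_sym {V : finType} {e : rel V} (P : {set V}) :
  symmetric e -> connect_sym (avoid_rel e P).
Proof.
move=> es; apply: sym_connect_sym => a b; rewrite /avoid_rel /= es.
by case: (e b a); case: (a \in P); case: (b \in P).
Qed.

Lemma disS {T : finType} {P X : {set T}} {x} :
  [disjoint P & X] -> x \in X -> x \notin P.
Proof. move=> /disjointP H HxS; apply/negP => HxP; exact: H x HxP HxS. Qed.

Theorem lemma6 (V : finType) (e : rel V)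
  (e_sym : symmetric e) (e_irr : irreflexive e)
  (S T Pm Pp : {set V}) (hST : [disjoint S & T])
  (hPm : min_lsep e S T Pm) (hPp : min_lsep e S T Pp)
  (hext : forall P : {set V}, min_lsep e S T P ->
     reach e S Pm \subset reach e S P /\ reach e S P \subset reach e S Pp)
  (v : V) :
  (gt_ext (lamL e (S :|: [set v]) T) (lamL e S T) <->
     v \in reach e T Pp :|: Pp) /\
  (gt_ext (lamL e S (T :|: [set v])) (lamL e S T) <->
     v \in reach e S Pm).
Proof.
have [[hPpsep hPpdis] hPpmin] := hPp.
have [[hPmsep hPmdis] hPmmin] := hPm.
have nohas : forall (P : {set V}) x p, ~~ has (fun y => y \in P) (x :: p) ->
    x \notin P /\ all (fun z => z \notin P) p.
  move=> P x p; rewrite -all_predC /= => /andP [H1 H2]; split => //.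
split.
{ rewrite (lam_min hPp) gt_lam; split.
  - move=> H; apply/negPn/negP => Hv; apply: H; exists Pp; split => //.
    rewrite inE negb_or in Hv; case/andP: Hv => Hv1 Hv2; split.
      move=> x p Hp; rewrite inE => /orP [HxS|/set1P Hxv] Hl.
        exact: hPpsep x p Hp HxS Hl.
      subst x.
      apply/negPn/negP => Hn; have [Hx Hall] := nohas _ _ _ Hn.
      have Hpa := path_avoid Hp Hx Hall.
      have C : connect (avoid_rel e Pp) v (last v p) by apply/connectP; exists p.
      move/negP: Hv1; apply; apply/reachP; exists (last v p).
        by rewrite Hl (avoid_notin C Hx).
      by rewrite avoid_sym.
    apply/disjointP => z Hz; rewrite inE => /orP [HS|/set1P Hzv].
      by move/negP: (disS hPpdis HS).
    by move: Hv2; rewrite -Hzv Hz.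
  - move=> Hv [Q [HQ HQk]]; have [HQsep HQdis] := HQ.
    set A := reach e S Pp; set B := reach e (S :|: [set v]) Q.
    have kmin := hPpmin.
    have HA : #|nb e A| <= #|Pp| by apply: subset_leq_card; exact: nb_reach.
    have HB : #|nb e B| <= #|Pp|.
      apply: leq_trans HQk; apply: subset_leq_card; exact: nb_reach.
    have SA : S \subset A.
      apply/subsetP => x HxS; exact: reach_sub HxS (disS hPpdis HxS).
    have SB : S \subset B.
      apply/subsetP => x HxS; apply: reach_sub; first by rewrite inE HxS.
      apply: disS HQdis _; by rewrite inE HxS.
    have AT : forall y, y \in A -> y \in T -> False.
      move=> y; exact: reach_sep hPpsep.
    have BT : forall y, y \in B -> y \in T -> False.
      move=> y; exact: reach_sep HQsep.
    have L1 : lsep e S T (nb e (A :|: B)).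
      apply: nb_sep; first by apply: subset_trans SA (subsetUl _ _).
      by move=> y; rewrite inE => /orP [H|H]; [apply: AT | apply: BT].
    have [L1sep L1dis] := L1.
    have L2 : lsep e S T (nb e (A :&: B)).
      apply: nb_sep; first by rewrite subsetI SA SB.
      by move=> y; rewrite inE => /andP [H _]; apply: AT.
    have Hsub := submod e A B.
    have K1 := kmin _ L1; have K2 := kmin _ L2.
    set D := nb e (A :|: B).
    have HDk : #|D| <= #|Pp| by rewrite /D; lia.
    have HD : min_lsep e S T D.
      split => // R HR; exact: leq_trans HDk (kmin _ HR).
    have [_ HDA] := hext D HD.
    have SD : S \subset reach e S D.
      apply/subsetP => x HxS; exact: reach_sub HxS (disS L1dis HxS).
    have L3 : lsep e S T (nb e (reach e S D)).
      apply: nb_sep SD _ => y; exact: reach_sep L1sep.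
    have K3 := kmin _ L3.
    have ED : nb e (reach e S D) = D.
      apply/eqP; rewrite eqEcard nb_reach /=; exact: leq_trans HDk K3.
    have Key : forall y, y \in D -> y \notin A -> y \in Pp.
      move=> y; rewrite -ED inE => /andP [_ /existsP [z /andP [Hz Hzy]]] HyA.
      apply: (subsetP (nb_reach e S Pp)); rewrite inE HyA /=.
      apply/existsP; exists z; by rewrite (subsetP HDA _ Hz).
    have walk : forall q w, w \in B -> path e w q ->
        all (fun z => z \notin Pp) q -> last w q \in T -> False.
      elim=> [|y q IH] w HwB /=; first by move=> _ _; exact: BT.
      move=> /andP [Hwy Hp] /andP [HyPp Hall] Hl.
      case HyQ: (y \in Q); last first.
        apply: IH _ Hp Hall Hl; apply: reach_step HwB Hwy _; by rewrite HyQ.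
      have HyA : y \notin A.
        apply/negP => HyA; apply: (AT (last y q)) Hl.
        apply: reach_conn HyA _; apply/connectP; exists q => //.
        exact: path_avoid.
      have HyB : y \notin B.
        by apply/negP => /reach_notin; rewrite HyQ.
      have HyD : y \in D.
        rewrite /D inE in_setU (negbTE HyA) (negbTE HyB) /=; apply/existsP; exists w.
        by rewrite in_setU HwB orbT Hwy.
      by move: HyPp; rewrite (Key _ HyD HyA).
    have HvB : v \in B.
      apply: reach_sub; first by rewrite inE set11 orbT.
      apply: disS HQdis _; by rewrite inE set11 orbT.
    have [q [Hq1 Hq2 Hq3]] : exists q, [/\ path e v q, last v q \in T &
        all (fun z => z \notin Pp) q].
      move: Hv; rewrite inE => /orP [/reachP [t /andP [Ht HtP] C]|HvP].
        rewrite avoid_sym // in C; move/connectP: C => [q Hq Hqt].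
        have [H1 H2] := avoid_path Hq; exists q; split => //; by rewrite -Hqt.
      have [x [p [Hp HxS HlT Hn]]] : exists x p, [/\ path e x p, x \in S,
          last x p \in T & ~~ has (fun y => y \in Pp :\ v) (x :: p)].
        apply: Classical_Prop.NNPP => Hne.
        have Ls : lsep e S T (Pp :\ v).
          split.
            move=> x p Hp HxS HlT; apply/negPn/negP => Hn; apply: Hne.
            by exists x, p.
          apply/disjointP => z; rewrite inE => /andP [_ HzP] HzS.
          by move/negP: (disS hPpdis HzS).
        have := kmin _ Ls; have := cardsD1 v Pp; rewrite HvP /=; lia.
      have Hhas := hPpsep x p Hp HxS HlT.
      have [Hx Hall] := nohas _ _ _ Hn.
      have Hvin : v \in x :: p.
        move/hasP: Hhas => [z Hz HzP]; case: (eqVneq z v) => [<- //|Hzv].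
        move: Hn; rewrite -all_predC => /allP /(_ z Hz) /=.
        by rewrite !inE Hzv HzP.
      have Hall' : all (fun z => z \notin Pp :\ v) (x :: p) by rewrite /= Hx.
      have [q [H1 H2 H3]] := suffix_lem Pp v x p Hp Hvin Hall'.
      by exists q; split => //; rewrite H2.
    exact: walk q v HvB Hq1 Hq3 Hq2. }
rewrite (lam_min hPm) gt_lam; split.
- move=> H; apply/negPn/negP => Hv; apply: H; exists Pm; split => //; split.
    move=> x p Hp HxS; rewrite inE => /orP [HT|/set1P Hl].
      exact: hPmsep x p Hp HxS HT.
    apply/negPn/negP => Hn; have [Hx Hall] := nohas _ _ _ Hn.
    have Hpa := path_avoid Hp Hx Hall.
    move/negP: Hv; apply; apply/reachP; exists x; first by rewrite HxS Hx.
    by apply/connectP; exists p.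
  exact: hPmdis.
- move=> Hv [Q [HQ HQk]]; have [HQsep HQdis] := HQ.
  have LQ : lsep e S T Q.
    split; last exact: HQdis.
    move=> x p Hp HxS HlT; apply: (HQsep x p Hp HxS); by rewrite inE HlT.
  have HQm : min_lsep e S T Q.
    split => // R HR; exact: leq_trans HQk (hPmmin _ HR).
  have [H1 _] := hext Q HQm.
  apply: (reach_sep HQsep (subsetP H1 _ Hv)); by rewrite inE set11 orbT.
Qed.
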